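(* Let $t:\Sigma^*\to\Omega^*$ be a rational partial function with suffix-closed domain $X=\mathrm{dom}(t)$, let $B$ be a trim right-subsequential transducer for $t[\mathcal R_t]$, and let $A$ be the right transducer obtained from $B$ by projecting input letters to their first component. If $A$ is not well-behaved, then $X$ contains a linear fooling set for $t$.
   Context: $x\wedge y$: longest common suffix; $\|x,y\|=|x|+|y|-2|x\wedge y|$. $u\mathrel{\mathcal R_t}v$ iff $\{z:uz\in X\}=\{z:vz\in X\}$ and $\{\|t(uw),t(vw)\|:uw,vw\in X\}$ is finite; $\mathcal R_t$ is a finite-index right congruence. For a finite-index right congruence $\mathcal R$, the look-ahead extension is $e_{\mathcal R}(a_1\cdots a_n)=(a_1,[\varepsilon]_{\mathcal R})(a_2,[a_1]_{\mathcal R})\cdots(a_n,[a_1\cdots a_{n-1}]_{\mathcal R})$ over the alphabet $\Sigma\times\Sigma^*/\mathcal R$, and $t[\mathcal R]$ is the partial function with domain $e_{\mathcal R}(X)$ and $t[\mathcal R](e_{\mathcal R}(x))=t(x)$. A real-time right transducer $(Q,\Gamma,\Omega,F,\Delta,I,o)$ has transitions $(q,a,y,p)\in Q\times\Gamma\times\Omega^*\times Q$, read as going from $p$ to $q$ while reading $a$ and outputting $y$; runs read the input from right to left: a run on $a_1\cdots a_n$ from $q_n$ to $q_0$ is $(q_0,a_1,y_1,q_1)\cdots(q_{n-1},a_n,y_n,q_n)$, with output $\mathsf{out}=y_1\cdots y_n$; it is initial if $q_n\in I$, accepting if $q_0\in F$, and then $\mathsf{out}_F=o(q_0)y_1\cdots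 y_n$ where $o:F\to\Omega^*$ is the terminal output; the transducer defines the relation of pairs (input, $\mathsf{out}_F$ of an initial accepting run). It is right-subsequential if $I=\{q_{\mathit{in}}\}$ and it is deterministic when reading right to left (for each state $p$ and letter $a$ at most one transition from $p$ reading $a$); it is trim if every state occurs on some initial accepting run. (By Reutenauer–Schützenberger, $t[\mathcal R_t]$ is right-subsequential.) $A$ has the same states, $F$, $q_{\mathit{in}}$, $o$, and transitions $\{(q,a,y,p):(q,(a,\rho),y,p)\in\Delta_B\}$; it defines $t$ and is unambiguous. Let $q\preceq p$ iff there is a run in $A$ from $p$ to $q$. A word $w$ is guarded by $p$ if there is a run in $A$ on $w$ from $p$ to some $q'$ with $p\preceq q'$; a run from $p$ on $w$ is guarded if $w$ is guarded by $p$. $A$ is well-behaved if for every state $p$ and all guarded runs $\pi,\pi'$ starting in $p$ and ending in $F$ with inputs of equal length, $\mathsf{out}_F(\pi)=\mathsf{out}_F(\pi')$. Linear fooling scheme for $t$: $(u_2,v_2,u,v,Z)$ with $u_2$ a suffix of $u$, $v_2$ a suffix of $v$, $|u_2|=|v_2|$, $\{u_2,v_2\}\{u,v\}^*Z\subseteq X$, and for each $n$ some $z_n\in Z$ with $|z_n|\in O(n)$ and $t(u_2wz_n)\ne t(v_2wz_n)$ for all $w\in\{u,v\}^{\le n}$; $\{u_2,v_2\}\{u,v\}^*Z$ is a linear fooling set. *)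

(* Defs.v *)
From mathcomp Require Import all_boot.
Set Implicit Arguments. Unset Strict Implicit. Unset Printing Implicit Defensive.

Section Words.
Variable T : eqType.
Fixpoint lcp (x y : seq T) : seq T :=
  match x, y with
  | a :: x', b :: y' => if a == b then a :: lcp x' y' else [::]
  | _, _ => [::]
  end.
Definition lcs (x y : seq T) : seq T := rev (lcp (rev x) (rev y)).
Definition wdist (x y : seq T) : nat := size x + size y - 2 * size (lcs x y).
End Words.

Section PFun.
Variables (S O : eqType).
Implicit Type t : seq S -> option (seq O).

Definition dom t (x : seq S) : Prop := exists y, t x = Some y.
Definition suffix_closed t : Prop := forall x y, dom t (x ++ y) -> dom t y.

Fixpoint gpath (Q : eqType) (delta : seq (Q * seq S * seq O * Q)) (p q : Q)
    (pi : seq (Q * seq S * seq O * Q)) : bool :=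
  match pi with
  | [::] => p == q
  | tau :: pi' => (tau.1.1.1 == p) && (tau \in delta) && gpath delta tau.2 q pi'
  end.

Definition rational t : Prop :=
  exists (Q : finType) (delta : seq (Q * seq S * seq O * Q)) (I F : pred Q),
    forall x y, t x = Some y <->
      exists (p q : Q) (pi : seq (Q * seq S * seq O * Q)),
        [/\ I p, F q, gpath delta p q pi,
            flatten [seq tau.1.1.2 | tau <- pi] = x &
            flatten [seq tau.1.2 | tau <- pi] = y].

Definition Rt t (u v : seq S) : Prop :=
  (forall z, dom t (u ++ z) <-> dom t (v ++ z)) /\
  exists s : seq nat, forall w y1 y2,
    t (u ++ w) = Some y1 -> t (v ++ w) = Some y2 -> wdist y1 y2 \in s.

(* look-ahead extension, classes given by cls : seq S -> C *)
Variable C : eqType.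
Variable cls : seq S -> C.
Fixpoint ext_aux (p w : seq S) : seq (S * C) :=
  match w with
  | [::] => [::]
  | a :: w' => (a, cls p) :: ext_aux (rcons p a) w'
  end.
Definition ext (w : seq S) : seq (S * C) := ext_aux [::] w.

Definition tR t (y : seq (S * C)) : option (seq O) :=
  if ext (map fst y) == y then t (map fst y) else None.

Definition in_star (u v w : seq S) : Prop :=
  exists ws : seq (seq S), all (fun x => (x == u) || (x == v)) ws /\ w = flatten ws.
Definition in_star_le (n : nat) (u v w : seq S) : Prop :=
  exists ws : seq (seq S),
    [/\ size ws <= n, all (fun x => (x == u) || (x == v)) ws & w = flatten ws].

Definition linear_fooling_scheme t (u2 v2 u v : seq S) (Z : seq S -> Prop) : Prop :=
  [/\ suffix u2 u, suffix v2 v, size u2 = size v2,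
      (forall x w z, (x = u2 \/ x = v2) -> in_star u v w -> Z z -> dom t (x ++ w ++ z)) &
      exists zs : nat -> seq S,
        [/\ forall n, Z (zs n),
            exists c N, forall n, N <= n -> size (zs n) <= c * n &
            forall n w, in_star_le n u v w -> t (u2 ++ w ++ zs n) <> t (v2 ++ w ++ zs n)]].
End PFun.

Record rtransducer (Q : finType) (G O : eqType) := RTransducer {
  rt_final : pred Q;
  rt_delta : seq (Q * G * seq O * Q);   (* (q, a, y, p): from p to q reading a *)
  rt_init : pred Q;
  rt_out : Q -> seq O                    (* terminal output (used on final states) *)
}.

Section Runs.
Variables (Q : finType) (G O : eqType) (T : rtransducer Q G O).

(* is_run p q pi : pi = (q0,a1,y1,q1)...(q_{n-1},a_n,y_n,q_n) is a run
   from p = q_n to q = q_0 *)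
Fixpoint is_run (p q : Q) (pi : seq (Q * G * seq O * Q)) : bool :=
  match pi with
  | [::] => p == q
  | tau :: pi' => (tau.1.1.1 == q) && (tau \in rt_delta T) && is_run p tau.2 pi'
  end.
Definition run_input (pi : seq (Q * G * seq O * Q)) : seq G := [seq tau.1.1.2 | tau <- pi].
Definition run_output (pi : seq (Q * G * seq O * Q)) : seq O := flatten [seq tau.1.2 | tau <- pi].
Definition run_states (q : Q) (pi : seq (Q * G * seq O * Q)) : seq Q := q :: [seq tau.2 | tau <- pi].

Definition realizes (f : seq G -> option (seq O)) : Prop :=
  forall x y, f x = Some y <->
    exists p q pi, [/\ rt_init T p, rt_final T q, is_run p q pi,
                       run_input pi = x & rt_out T q ++ run_output pi = y].

Definition right_subsequential : Prop :=
  (exists qin, forall q, rt_init T q = (q == qin)) /\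
  (forall p a q q' y y', (q, a, y, p) \in rt_delta T -> (q', a, y', p) \in rt_delta T ->
      q = q' /\ y = y').

Definition trim : Prop :=
  forall s : Q, exists p q pi,
    [/\ rt_init T p, rt_final T q, is_run p q pi & s \in run_states q pi].

(* q <= p  iff  reach p q *)
Definition reach (p q : Q) : Prop := exists pi, is_run p q pi.
Definition guarded (p : Q) (w : seq G) : Prop :=
  exists q' pi, [/\ is_run p q' pi, run_input pi = w & reach q' p].

Definition well_behaved : Prop :=
  forall p q q' pi pi',
    is_run p q pi -> is_run p q' pi' ->
    guarded p (run_input pi) -> guarded p (run_input pi') ->
    size (run_input pi) = size (run_input pi') ->
    rt_final T q -> rt_final T q' ->
    rt_out T q ++ run_output pi = rt_out T q' ++ run_output pi'.
End Runs.

Definition projA (Q : finType) (G C O : eqType) (B : rtransducer Q (G * C)%type O)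
  : rtransducer Q G O :=
  RTransducer (rt_final B)
    [seq (tau.1.1.1, tau.1.1.2.1, tau.1.2, tau.2) | tau <- rt_delta B]
    (rt_init B) (rt_out B).

(* Main.v *)
Require Import Defs.
From mathcomp Require Import all_boot.
From Stdlib Require Import Classical.

Section Aux.
Variables (Q : finType) (G O : eqType) (T : rtransducer Q G O).

Lemma is_run_cat p m q pi1 pi2 :
  is_run T m q pi2 -> is_run T p m pi1 -> is_run T p q (pi2 ++ pi1).
Proof.
elim: pi2 q => [|tau pi2 IH] q /=; first by move=> /eqP -> .
by case/andP => /andP [-> ->] H1 H2 /=; apply: IH.
Qed.

Lemma is_run_split p0 q pi s :
  is_run T p0 q pi -> s \in run_states q pi -> is_run T p0 s (drop (index s (run_states q pi)) pi).
Proof.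
elim: pi q => [|tau pi IH] q /=.
  by move=> /eqP -> ; rewrite inE => /eqP ->; rewrite eqxx.
case/andP => /andP [/eqP Hq Hin] Hr.
rewrite inE; case: (eqVneq s q) => [->|ne] /=.
  by move=> _; rewrite Hq eqxx Hin.
by move=> Hs; apply: IH.
Qed.
End Aux.
Arguments is_run_cat {Q G O T p m q pi1 pi2}.
Arguments is_run_split {Q G O T p0 q pi s}.

Lemma lift_run {Q : finType} {G C O : eqType} {B : rtransducer Q (G * C)%type O} {p q pi} :
  is_run (projA B) p q pi -> exists piB, [/\ is_run B p q piB,
     [seq x.1 | x <- run_input piB] = run_input pi & run_output piB = run_output pi].
Proof.
elim: pi q => [|tau pi IH] q /=.
  by move=> H; exists [::]; split.
case/andP => /andP [/eqP Hq /mapP [tb Htb Etau]] Hr; subst tau.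
have [piB [H1 H2 H3]] := IH _ Hr.
exists (tb :: piB); split => /=.
- by move: Hq => /= ->; rewrite eqxx Htb.
- by rewrite H2.
- by move: H3; rewrite /run_output /= => ->.
Qed.

Theorem proposition23 (Sigma Omega : finType) (t : seq Sigma -> option (seq Omega))
    (Cls : finType) (cls : seq Sigma -> Cls)
    (Q : finType) (B : rtransducer Q (Sigma * Cls)%type Omega) :
  rational t ->
  suffix_closed t ->
  (forall u v, cls u = cls v <-> Rt t u v) ->
  (forall c : Cls, exists u, cls u = c) ->
  realizes B (tR cls t) ->
  right_subsequential B ->
  trim B ->
  ~ well_behaved (projA B) ->
  exists (u2 v2 u v : seq Sigma) (Z : seq Sigma -> Prop),
    linear_fooling_scheme t u2 v2 u v Z.
Proof.
move=> _ _ _ _ Hreal _ Htrim Hnwb.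
apply: NNPP => Hno; apply: Hnwb.
move=> p q q' pi pi' Hpi Hpi' [q1 [pg [Hpg Hig [pr Hpr]]]] [q1' [pg' [Hpg' Hig' [pr' Hpr']]]] Hsz Hf Hf'.
apply: NNPP => Hneq; apply: Hno.
have [qi [qf [piT [Hi _ HT Hs]]]] := Htrim p.
have Hrho := is_run_split (T:=B) HT Hs.
set rho := drop _ piT in Hrho.
set z0 := [seq x.1 | x <- run_input rho].
have K : forall q2 piA, is_run (projA B) p q2 piA -> rt_final B q2 ->
    t (run_input piA ++ z0) = Some (rt_out B q2 ++ run_output piA ++ run_output rho).
  move=> q2 piA HA HF.
  have [piB [H1 H2 H3]] := lift_run HA.
  have HR := is_run_cat H1 Hrho.
  have : tR cls t (run_input (piB ++ rho)) = Some (rt_out B q2 ++ run_output (piB ++ rho)).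
    by apply/(Hreal _ _).2; exists qi, q2, (piB ++ rho); split.
  rewrite /tR; case: ifP => // _.
  rewrite /run_input /run_output !map_cat flatten_cat -/(run_input piB) -/(run_output piB) H2 H3 => ->.
  done.
set u := run_input pr ++ run_input pi.
set v := run_input pr' ++ run_input pi'.
have Lu : is_run (projA B) p p (pr ++ pg) by apply: is_run_cat Hpr Hpg.
have Lv : is_run (projA B) p p (pr' ++ pg') by apply: is_run_cat Hpr' Hpg'.
have Iu : run_input (pr ++ pg) = u by rewrite /run_input map_cat -/(run_input pg) Hig.
have Iv : run_input (pr' ++ pg') = v by rewrite /run_input map_cat -/(run_input pg') Hig'.
have Star : forall w, in_star u v w -> exists l, is_run (projA B) p p l /\ run_input l = w.
  move=> w [ws [Hall ->]]; elim: ws Hall => [|x ws IH] /=.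
    by move=> _; exists [::]; split => //=.
  case/andP => /orP [] /eqP -> /IH [l [Hl Hil]].
    exists ((pr ++ pg) ++ l); split; first exact: is_run_cat Lu Hl.
    by rewrite /run_input map_cat -/(run_input l) -/(run_input (pr ++ pg)) Iu Hil.
  exists ((pr' ++ pg') ++ l); split; first exact: is_run_cat Lv Hl.
  by rewrite /run_input map_cat -/(run_input l) -/(run_input (pr' ++ pg')) Iv Hil.
have Ev : forall q2 piA l, is_run (projA B) p q2 piA -> rt_final B q2 -> is_run (projA B) p p l ->
   t (run_input piA ++ run_input l ++ z0) =
     Some ((rt_out B q2 ++ run_output piA) ++ run_output l ++ run_output rho).
  move=> q2 piA l HA HF Hl.
  have := K _ _ (is_run_cat HA Hl) HF.
  by rewrite /run_input /run_output !map_cat flatten_cat !catA.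
exists (run_input pi), (run_input pi'), u, v, (fun z => z = z0).
split.
- exact: suffix_suffix.
- exact: suffix_suffix.
- exact: Hsz.
- move=> x w z Hx /Star [l [Hl <-]] ->.
  case: Hx => ->.
    by eexists; apply: Ev Hpi Hf Hl.
  by eexists; apply: Ev Hpi' Hf' Hl.
exists (fun _ => z0); split => //.
  exists (size z0), 1 => n Hn; exact: leq_pmulr.
move=> n w [ws [_ Hall Hw]].
have [l [Hl <-]] : exists l, is_run (projA B) p p l /\ run_input l = w.
  by apply: Star; exists ws.
rewrite (Ev _ _ _ Hpi Hf Hl) (Ev _ _ _ Hpi' Hf' Hl) => -[] E.
apply: Hneq.
have Hs2 : size (rt_out B q ++ run_output pi) = size (rt_out B q' ++ run_output pi').
  move/(congr1 size): (E).
  rewrite (size_cat (rt_out B q ++ run_output pi)) (size_cat (rt_out B q' ++ run_output pi')).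
  exact: addIn.
by move/eqP: E; rewrite eqseq_cat // => /andP [/eqP ->].
Qed.
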